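(* Let $T_e=\{0,6,10,28,36,66,78,\dots\}$ be the set of even triangular numbers and $T_o=\{1,3,15,21,45,55,\dots\}$ the set of odd triangular numbers (a triangular number is an integer of the form $k(k+1)/2$ with $k\ge 0$ an integer). Then for every even integer $n\geq 1$, $$\sum_{t\in T_e,\ t\le n} p\!\left(\frac{n-t}{2}\right)=p_d(n),$$ and for every odd integer $n\geq 1$, $$\sum_{t\in T_o,\ t\le n} p\!\left(\frac{n-t}{2}\right)=p_o(n).$$
   Context: $p(n)$ is the number of partitions of $n$ (with $p(0)=1$), $p_d(n)$ is the number of partitions of $n$ into distinct parts, and $p_o(n)$ is the number of partitions of $n$ into odd parts. In the sums, each triangular number is counted once. *)

(* Defs.v *)
From mathcomp Require Import all_boot.
Unset Printing Implicit Defensive.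

(* A partition of n is encoded by its multiplicity function: m i is the number
   of parts equal to i (for 1 <= i <= n); there are no parts equal to 0, and
   the parts sum to n.  Parts and multiplicities are at most n, so the
   multiplicity function lives in the finite type {ffun 'I_n.+1 -> 'I_n.+1}. *)
Definition is_partition (n : nat) (m : {ffun 'I_n.+1 -> 'I_n.+1}) : bool :=
  (nat_of_ord (m ord0) == 0) && (\sum_(i < n.+1) i * m i == n).

Definition p (n : nat) : nat := #|[set m : {ffun 'I_n.+1 -> 'I_n.+1} | is_partition n m]|.

Definition pd (n : nat) : nat :=
  #|[set m : {ffun 'I_n.+1 -> 'I_n.+1} | is_partition n m && [forall i : 'I_n.+1, m i <= 1]]|.

Definition po (n : nat) : nat :=
  #|[set m : {ffun 'I_n.+1 -> 'I_n.+1} | is_partition n m && [forall i : 'I_n.+1, ~~ odd i ==> (nat_of_ord (m i) == 0)]]|.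

(* t is triangular: t = k(k+1)/2 for some integer k >= 0 (necessarily k <= t). *)
Definition is_triangular (t : nat) : bool :=
  [exists k : 'I_t.+1, k * k.+1 == t.*2].

(* Main.v *)
Require Import Defs.
From mathcomp Require Import all_boot all_algebra.
From mathcomp Require Import zify ring lra.
Unset Printing Implicit Defensive.
Import GRing.Theory Num.Theory.
Local Open Scope ring_scope.

Notation P := {poly int}.


Definition eqm (M : nat) (p q : P) := forall i, (i < M)%N -> p`_i = q`_i.

Lemma eqm_refl M p : eqm M p p. Proof. by []. Qed.
Lemma eqm_sym M p q : eqm M p q -> eqm M q p. Proof. by move=> h i /h ->. Qed.
Lemma eqm_trans M p q r : eqm M p q -> eqm M q r -> eqm M p r.
Proof. by move=> h1 h2 i hi; rewrite h1 // h2. Qed.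
Lemma eqm_le M M' p q : (M' <= M)%N -> eqm M p q -> eqm M' p q.
Proof. by move=> hM h i hi; apply: h; apply: leq_trans hM. Qed.
Lemma eqmD M p q p' q' : eqm M p p' -> eqm M q q' -> eqm M (p + q) (p' + q').
Proof. by move=> h1 h2 i hi; rewrite !coefD h1 // h2. Qed.
Lemma eqmM M p q p' q' : eqm M p p' -> eqm M q q' -> eqm M (p * q) (p' * q').
Proof.
move=> h1 h2 i hi; rewrite !coefM; apply: eq_bigr => j _.
rewrite h1; last by apply: leq_ltn_trans hi; rewrite -ltnS.
by rewrite h2 // (leq_ltn_trans (leq_subr _ _) hi).
Qed.
Lemma eqm_sum M (I : finType) (F G : I -> P) : (forall i, eqm M (F i) (G i)) ->
  eqm M (\sum_i F i) (\sum_i G i).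
Proof. by move=> h i hi; rewrite !coef_sum; apply: eq_bigr => j _; apply: h. Qed.
Lemma eqm_prod M (I : finType) (F G : I -> P) : (forall i, eqm M (F i) (G i)) ->
  eqm M (\prod_i F i) (\prod_i G i).
Proof.
move=> h; apply: (big_rec2 (eqm M)) => // i x y _ hxy; exact: eqmM.
Qed.
Lemma eqm_Xn M k : (M <= k)%N -> eqm M 'X^k 0.
Proof. by move=> hk i hi; rewrite coefXn coef0; case: eqP => // E; move: hi; rewrite E ltnNge hk. Qed.
Lemma eqm_XnM M k p : (M <= k)%N -> eqm M ('X^k * p) 0.
Proof. by move=> hk i hi; rewrite coefXnM coef0 (leq_trans hi hk). Qed.

Lemma eqm_prod_trunc M n K (f : nat -> P) : (n <= K)%N ->
  (forall i, (n <= i < K)%N -> eqm M (f i) 1) ->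
  eqm M (\prod_(i < K) f i) (\prod_(i < n) f i).
Proof.
move=> hnK; elim: K hnK => [|K IH] hnK h.
  by move: hnK; rewrite leqn0 => /eqP ->.
move: hnK; rewrite leq_eqVlt => /orP [/eqP -> //|hnK].
rewrite big_ord_recr /=; rewrite -[X in eqm M _ X]mulr1; apply: eqmM.
  by apply: IH => // i /andP [h1 h2]; apply: h; rewrite h1 ltnS ltnW.
by apply: h; rewrite -ltnS hnK ltnSn.
Qed.
Lemma eqm_sum_trunc M n K (f : nat -> P) : (n <= K)%N ->
  (forall i, (n <= i < K)%N -> eqm M (f i) 0) ->
  eqm M (\sum_(i < K) f i) (\sum_(i < n) f i).
Proof.
move=> hnK; elim: K hnK => [|K IH] hnK h.
  by move: hnK; rewrite leqn0 => /eqP ->.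
move: hnK; rewrite leq_eqVlt => /orP [/eqP -> //|hnK].
rewrite big_ord_recr /=; rewrite -[X in eqm M _ X]addr0; apply: eqmD.
  by apply: IH => // i /andP [h1 h2]; apply: h; rewrite h1 ltnS ltnW.
by apply: h; rewrite -ltnS hnK ltnSn.
Qed.
Lemma eqm_cancel M a u p q : eqm M (a * u) 1 -> eqm M (p * a) (q * a) -> eqm M p q.
Proof.
move=> hu h.
apply: (@eqm_trans _ _ (p * (a * u))); first by rewrite -[X in eqm M X]mulr1; apply: eqmM => //; apply: eqm_sym.
rewrite mulrA; apply: (@eqm_trans _ _ (q * a * u)); first by apply: eqmM.
rewrite -mulrA -[X in eqm M _ X]mulr1; by apply: eqmM.
Qed.

Set Implicit Arguments. Unset Strict Implicit.

Section QB.
Variable R : comNzRingType.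
Variable q : R.

Fixpoint qb (n k : nat) : R :=
  match n, k with
  | _, 0 => 1
  | 0, _.+1 => 0
  | n'.+1, k'.+1 => qb n' k' + q ^+ k'.+1 * qb n' k
  end.

Lemma qb0 n : qb n 0 = 1. Proof. by case: n. Qed.
Lemma qbSS n k : qb n.+1 k.+1 = qb n k + q ^+ k.+1 * qb n k.+1. Proof. by []. Qed.
Lemma qb_small n k : (n < k)%N -> qb n k = 0.
Proof.
elim: n k => [|n IH] [|k] //= hk.
by rewrite !IH ?mulr0 ?addr0 // ltnW.
Qed.

Lemma rothe n : forall x w : R, \prod_(i < n) (x + w * q ^+ i) =
  \sum_(k < n.+1) q ^+ 'C(k, 2) * qb n k * w ^+ k * x ^+ (n - k).
Proof.
elim: n => [|n IH] x w.
  by rewrite big_ord0 big_ord1 /= bin_small // !expr0 !mulr1.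
rewrite big_ord_recl /= expr0 mulr1.
under eq_bigr do rewrite exprS mulrA.
rewrite IH mulrDl !big_distrr /=.
rewrite [RHS]big_ord_recl /= ?qb0 expr0 !mulr1 subn0 bin_small // expr0 mul1r.
rewrite /bump /=.
under [X in _ = _ + X]eq_bigr do rewrite !add1n add0n subSS mulrDr mulrDl mulrDl.
rewrite big_split /= [X in _ = _ + X]addrC addrA; congr (_ + _); last first.
  apply: eq_bigr => k _; rewrite binS bin1 exprD exprMn !exprS; ring.
rewrite big_ord_recl /= bin_small // qb0 expr0 !mul1r subn0 -exprS.
rewrite [in RHS]big_ord_recr /= qb_small // !(mulr0, mul0r) addr0; congr (_ + _).
apply: eq_bigr => k _.
rewrite /bump /= add1n.
have hk : (k < n)%N by [].
rewrite -(subnSK hk) exprS binS bin1 exprD exprMn !exprS. ring.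
Qed.

Definition fac n : R := \prod_(i < n) (1 - q ^+ i.+1).

Lemma facS n : fac n.+1 = fac n * (1 - q ^+ n.+1).
Proof. by rewrite /fac big_ord_recr. Qed.

Lemma qb_fac n k : (k <= n)%N -> qb n k * fac k * fac (n - k) = fac n.
Proof.
have fac0 : fac 0 = 1 by rewrite /fac big_ord0.
elim: n k => [|n IH] [|k] hk; rewrite ?qb0 ?fac0 ?mul1r ?mulr1 ?subn0 //.
rewrite subSS qbSS !facS.
rewrite mulrDl mulrDl.
have E1 : qb n k * (fac k * (1 - q ^+ k.+1)) * fac (n - k) = fac n * (1 - q ^+ k.+1).
  by rewrite -(IH k hk); ring.
rewrite E1.
move: hk; rewrite leq_eqVlt => /orP [/eqP E|hk].
  by rewrite E qb_small // mulr0 !mul0r addr0.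
have E2 : fac (n - k) = fac (n - k.+1) * (1 - q ^+ (n - k)).
  have -> : (n - k = (n - k.+1).+1)%N by lia.
  by rewrite facS.
rewrite E2.
have E3 := IH k.+1 hk.
have -> : q ^+ k.+1 * qb n k.+1 * (fac k * (1 - q ^+ k.+1)) * (fac (n - k.+1) * (1 - q ^+ (n - k)))
   = q ^+ k.+1 * (1 - q ^+ (n - k)) * (qb n k.+1 * (fac k * (1 - q ^+ k.+1)) * fac (n - k.+1)) by ring.
rewrite facS in E3.
rewrite E3.
have -> : q ^+ k.+1 * (1 - q ^+ (n - k)) = q ^+ k.+1 - q ^+ n.+1.
  by rewrite mulrBr mulr1 -exprD addSn subnKC // ltnW.
ring.
Qed.

End QB.
Arguments qb : simpl never.

Unset Implicit Arguments. Set Strict Implicit.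


Lemma prodXn (I : finType) (e : I -> nat) :
  \prod_i ('X^(e i) : P) = 'X^(\sum_i e i).
Proof.
apply/esym; apply: (big_morph (fun n => 'X^n : P)); last by [].
by move=> a b; rewrite exprD.
Qed.

Lemma count_coef n (Q : 'I_n.+1 -> 'I_n.+1 -> bool) k :
  (\prod_(i < n.+1) \sum_(j < n.+1) ((Q i j)%:R * 'X^(i * j) : P))`_k =
  (#|[set m : {ffun 'I_n.+1 -> 'I_n.+1} |
      [forall i, Q i (m i)] && (\sum_(i < n.+1) i * m i == k)%N]|)%:R.
Proof.
rewrite bigA_distr_bigA /= coef_sum.
rewrite -sum1_card natr_sum [in RHS]big_mkcond /=.
apply: eq_bigr => f _.
rewrite big_split /= prodXn inE.
case: (boolP [forall i, Q i (f i)]) => H /=.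
  rewrite big1 ?mul1r ?coefXn; last by move=> i _; move/forallP: H => ->.
  by rewrite eq_sym; case: eqP.
move: H; rewrite negb_forall => /existsP [i Hi].
by rewrite (bigD1 i) //= (negbTE Hi) !mul0r coef0.
Qed.

Definition geo n i : P := \sum_(j < n.+1) 'X^(i.+1 * j).
Definition Pn n : P := \prod_(i < n) geo n i.
Definition Dp n : P := \prod_(i < n) (1 + 'X^(i.+1)).
Definition Op n : P := \prod_(i < n) (if odd i.+1 then geo n i else 1).

Lemma factor0 n (F : 'I_n.+1 -> bool) :
  \sum_(j < n.+1) ((((@ord0 n) == 0 :> nat) ==> (j == 0 :> nat)) && F j)%:R * ('X^(@ord0 n * j) : P)
  = (F ord0)%:R.
Proof.
rewrite big_ord_recl /= mul0n expr0 mulr1 big1 ?addr0 //.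
by move=> j _; rewrite /= mul0r.
Qed.

Lemma forall0 n (m : {ffun 'I_n.+1 -> 'I_n.+1}) :
  [forall i : 'I_n.+1, (i == 0 :> nat) ==> (m i == 0 :> nat)] = (m ord0 == 0 :> nat).
Proof.
apply/forallP/idP => [h|h i]; first by apply: (implyP (h ord0)).
apply/implyP => /eqP hi.
by have -> : i = ord0 by apply: val_inj.
Qed.

Lemma p_Pn n : (Pn n)`_n = (p n)%:R.
Proof.
rewrite /p.
have -> : [set m : {ffun 'I_n.+1 -> 'I_n.+1} | is_partition n m] =
  [set m : {ffun 'I_n.+1 -> 'I_n.+1} |
      [forall i : 'I_n.+1, ((i == 0 :> nat) ==> (m i == 0 :> nat)) && true] && (\sum_(i < n.+1) i * m i == n)%N].
  apply/setP => m; rewrite !inE /is_partition.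
  under eq_forallb do rewrite andbT.
  by rewrite forall0.
rewrite -(count_coef _ (fun i j => ((i == 0 :> nat) ==> (j == 0 :> nat)) && true)).
rewrite big_ord_recl factor0 /= mul1r.
rewrite /Pn /geo; apply: (congr1 (fun p : P => p`_n)); apply: eq_bigr => i _.
by apply: eq_bigr => j _; rewrite mul1r.
Qed.

Lemma set_helper n (Q' : 'I_n.+1 -> 'I_n.+1 -> bool) :
  [set m : {ffun 'I_n.+1 -> 'I_n.+1} | is_partition n m && [forall i, Q' i (m i)]] =
  [set m : {ffun 'I_n.+1 -> 'I_n.+1} |
      [forall i : 'I_n.+1, ((i == 0 :> nat) ==> (m i == 0 :> nat)) && Q' i (m i)]
      && (\sum_(i < n.+1) i * m i == n)%N].
Proof.
apply/setP => m; rewrite !inE /is_partition -forall0.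
case: (\sum_(i < n.+1) i * m i == n)%N; rewrite ?andbT ?andbF //.
apply/andP/forallP => [[/forallP h1 /forallP h2] i|h]; first by rewrite h1 h2.
by split; apply/forallP => i; case/andP: (h i).
Qed.

Lemma pd_Dp n : (Dp n)`_n = (pd n)%:R.
Proof.
rewrite /pd (set_helper _ (fun i j => (nat_of_ord j <= 1)%N)).
rewrite -(count_coef _ (fun (i j : 'I_n.+1) => ((i == 0 :> nat) ==> (j == 0 :> nat)) && (nat_of_ord j <= 1)%N)) big_ord_recl factor0 /= mul1r.
rewrite /Dp; apply: (congr1 (fun p : P => p`_n)); apply: eq_bigr => i _.
case: n i => [|n] i; first by case: i.
rewrite big_ord_recl /= mul1r muln0 expr0 big_ord_recl /= mul1r muln1.
rewrite big1 ?addr0 // => j _ /=.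
by rewrite mul0r.
Qed.

Lemma po_Op n : (Op n)`_n = (po n)%:R.
Proof.
rewrite /po (set_helper _ (fun (i j : 'I_n.+1) => ~~ odd i ==> (nat_of_ord j == 0)%N)).
rewrite -(count_coef _ (fun (i j : 'I_n.+1) => ((i == 0 :> nat) ==> (j == 0 :> nat)) && (~~ odd i ==> (nat_of_ord j == 0)%N))) big_ord_recl factor0 /= mul1r.
rewrite /Op; apply: (congr1 (fun p : P => p`_n)); apply: eq_bigr => i _.
rewrite /= /geo add0n negbK; case: (odd i) => /=.
  rewrite big_ord_recl /= mul1r muln0 expr0 big1 ?addr0 // => j _ /=.
  by rewrite mul0r.
by apply: eq_bigr => j _; rewrite mul1r.
Qed.

Notation F n := (fac ('X : P) n).

Lemma eqm_prodP M (I : finType) (Pr : pred I) (F G : I -> P) :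
  (forall i, Pr i -> eqm M (F i) (G i)) ->
  eqm M (\prod_(i | Pr i) F i) (\prod_(i | Pr i) G i).
Proof. move=> h; apply: (big_rec2 (eqm M)) => // i x y Pi hxy; apply: eqmM => //; exact: h. Qed.

Lemma eqm_1subX M k : (M <= k)%N -> eqm M (1 - 'X^k) 1.
Proof. by move=> hk i hi; rewrite coefB coefXn; case: eqP => [E|]; [move: hi; rewrite E ltnNge hk | rewrite subr0]. Qed.
Lemma eqm_1addX M k : (M <= k)%N -> eqm M (1 + 'X^k) 1.
Proof. by move=> hk i hi; rewrite coefD coefXn; case: eqP => [E|]; [move: hi; rewrite E ltnNge hk | rewrite addr0]. Qed.

Lemma geo_inv n i : eqm n.+1 (geo n i * (1 - 'X^(i.+1))) 1.
Proof.
have -> : geo n i * (1 - 'X^(i.+1)) = 1 - 'X^(i.+1 * n.+1).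
  rewrite /geo; under eq_bigr do rewrite exprM.
  rewrite exprM; move: ('X^(i.+1) : P) => y.
  rewrite -[1 - y ^+ n.+1]opprB subrX1; ring.
by apply: eqm_1subX; rewrite leq_pmull.
Qed.

Lemma PnA n : eqm n.+1 (Pn n * F n) 1.
Proof.
rewrite /Pn /fac -big_split /=.
have h := @eqm_prod n.+1 'I_n (fun i : 'I_n => geo n i * (1 - 'X^(i.+1))) (fun _ => 1) (fun i => @geo_inv n i).
by rewrite big1_eq in h.
Qed.

Lemma F_trunc m K : (m <= K)%N -> eqm m.+1 (F K) (F m).
Proof.
move=> hmK; apply: (@eqm_prod_trunc m.+1 m K (fun i => 1 - 'X^(i.+1))) => // i /andP [h1 _].
by apply: eqm_1subX.
Qed.

Lemma p_coef m N U : (m <= N)%N -> eqm N.+1 (U * F N) 1 -> U`_m = (p m)%:R.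
Proof.
move=> hmN hU; rewrite -p_Pn.
suff h : eqm m.+1 (Pn m) U by rewrite h.
have hU' : eqm m.+1 (U * F m) 1.
  apply: (eqm_trans _ _ (U * F N)); last by apply: (eqm_le N.+1) => //; rewrite ltnS.
  by apply: eqmM => //; apply: eqm_sym; apply: F_trunc.
apply: (eqm_cancel _ (F m) (Pn m)); first by rewrite mulrC; apply: PnA.
exact: (eqm_trans _ _ _ _ (PnA m) (eqm_sym _ _ _ hU')).
Qed.

Definition Bp n : P := \prod_(i < n) (1 - 'X^((i.+1).*2)).
Definition Cq n : P := \prod_(i < n | odd i.+1) (1 - 'X^(i.+1)).
Definition Ev n : P := \prod_(i < n | ~~ odd i.+1) (1 - 'X^(i.+1)).
Definition U2 n : P := Pn n \Po 'X^2.

Lemma B_comp n : F n \Po 'X^2 = Bp n.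
Proof.
rewrite /fac rmorph_prod; apply: eq_bigr => i _.
by rewrite rmorphB rmorph1 rmorphXn /= comp_polyX -exprM mul2n.
Qed.

Lemma DA n : Dp n * F n = Bp n.
Proof.
rewrite /Dp /fac -big_split; apply: eq_bigr => i _ /=.
rewrite -muln2 exprM; move: ('X^(i.+1) : P) => y; ring.
Qed.

Lemma F_CE n : F n = Cq n * Ev n.
Proof. by rewrite /fac (bigID (fun i : 'I_n => odd i.+1)). Qed.

Lemma Ev_double K : \prod_(i < K.*2 | ~~ odd i.+1) (1 - 'X^(i.+1)) = Bp K :> P.
Proof.
elim: K => [|K IH]; first by rewrite /Bp !big_ord0.
rewrite doubleS big_mkcond big_ord_recr big_ord_recr /= -big_mkcond IH.
rewrite /Bp big_ord_recr /= odd_double /= mulr1 doubleS.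
by [].
Qed.

Lemma Ev_B n : eqm n.+1 (Ev n) (Bp n).
Proof.
rewrite -Ev_double /Ev; apply: eqm_sym.
rewrite big_mkcond [X in eqm _ _ X]big_mkcond /=.
apply: (eqm_prod_trunc _ _ _ (fun i => if ~~ odd i.+1 then 1 - 'X^(i.+1) else 1)).
  by rewrite -addnn leq_addr.
move=> i /andP [h1 _]; case: ifP => _ //.
by apply: eqm_1subX.
Qed.

Lemma eqm_comp2 M p q : eqm M p q -> eqm M (p \Po 'X^2) (q \Po 'X^2).
Proof.
move=> h i hi; rewrite !coef_comp_poly_Xn //; case: ifP => // _.
by apply: h; apply: leq_ltn_trans hi; apply: leq_div.
Qed.

Lemma BU2 n : eqm n.+1 (Bp n * U2 n) 1.
Proof.
have := eqm_comp2 _ _ _ (PnA n).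
by rewrite comp_polyM B_comp -polyC1 comp_polyC polyC1 mulrC.
Qed.

Lemma OpCq n : eqm n.+1 (Op n * Cq n) 1.
Proof.
rewrite /Op /Cq -big_mkcond -big_split /=.
apply: (eqm_trans _ _ (\prod_(i < n | odd i.+1) (1:P))); last by rewrite big1_eq.
by apply: eqm_prodP => i _; apply: geo_inv.
Qed.

Lemma euler n : eqm n.+1 (Op n) (Dp n).
Proof.
have h1 : eqm n.+1 (Bp n) (Dp n * Cq n * Bp n).
  rewrite -{1}DA F_CE mulrA; apply: eqmM => //; exact: Ev_B.
have h2 : eqm n.+1 (Dp n * Cq n) 1.
  apply: (eqm_trans _ _ (Dp n * Cq n * (Bp n * U2 n))).
    by rewrite -[X in eqm _ X]mulr1; apply: eqmM => //; apply: eqm_sym; apply: BU2.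
  rewrite mulrA; apply: (eqm_trans _ _ (Bp n * U2 n)); last exact: BU2.
  by apply: eqmM => //; apply: eqm_sym.
apply: (eqm_trans _ _ (Op n * (Dp n * Cq n))).
  by rewrite -[X in eqm _ X]mulr1; apply: eqmM => //; apply: eqm_sym.
rewrite mulrCA -[X in eqm _ _ X]mulr1; apply: eqmM => //; exact: OpCq.
Qed.

Definition tri m := 'C(m.+1, 2).

Lemma bin2_dbl a : ('C(a, 2) * 2 = a * a.-1)%N.
Proof.
elim: a => [|a IH] //; rewrite binS bin1 mulnDl IH; case: a {IH} => [|a] //=; lia.
Qed.

Lemma tri_dbl m : (tri m * 2 = m.+1 * m)%N.
Proof. by rewrite /tri bin2_dbl. Qed.

Lemma tri_ge m : (m <= tri m)%N.
Proof. have := tri_dbl m; nia. Qed.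

Lemma e1 L m : (m <= L)%N -> ('C(L - m, 2) + L * (L + L - (L - m)) = 'C(L,2) + L*L + tri m)%N.
Proof.
move=> hm; have := bin2_dbl (L - m); have := bin2_dbl L; have := tri_dbl m.
have [r ->] : exists r, L = (m + r)%N by exists (L - m)%N; lia.
rewrite addKn; case: r => [|r]; case: m {hm} => [|m] /=; nia.
Qed.

Lemma e2 L m : (m < L)%N -> ('C(m + L.+1, 2) + L * (L + L - (m + L.+1)) = 'C(L,2) + L*L + tri m)%N.
Proof.
move=> hm; have := bin2_dbl (m + L.+1); have := bin2_dbl L; have := tri_dbl m.
have [r ->] : exists r, L = (m + r.+1)%N by exists (L - m.+1)%N; lia.
case: m {hm} => [|m] /=; nia.
Qed.

Lemma part1 L : \prod_(i < L) ('X^L + 1 * 'X^i) = 'X^('C(L,2)) * Dp L :> P.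
Proof.
have -> : \prod_(i < L) ('X^L + 1 * 'X^i) = \prod_(i < L) ('X^i * (1 + 'X^(L - i))) :> P.
  apply: eq_bigr => i _; rewrite mul1r mulrDr mulr1 -exprD subnKC 1?addrC //.
  exact: ltnW.
rewrite big_split /= prodXn -bin2_sum big_mkord; congr (_ * _).
rewrite /Dp -(big_mkord xpredT (fun i => 1 + 'X^(i.+1))) big_nat_rev big_mkord.
by apply: eq_bigr => i _; rewrite add0n subnSK.
Qed.

Lemma part2 K : \prod_(i < K.+1) ('X^(K.+1) + 1 * 'X^(K.+1 + i)) = 'X^(K.+1 * K.+1) * ((1 + 1) * Dp K) :> P.
Proof.
have -> : \prod_(i < K.+1) ('X^(K.+1) + 1 * 'X^(K.+1 + i)) = \prod_(i < K.+1) ('X^(K.+1) * (1 + 'X^i)) :> P.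
  by apply: eq_bigr => i _; rewrite mul1r mulrDr mulr1 exprD.
rewrite big_split /= prodr_const card_ord -exprM; congr (_ * _).
by rewrite big_ord_recl expr0.
Qed.

Lemma gauss_exact K (L := K.+1) :
  Dp L * ((1 + 1) * Dp K) =
  \sum_(m < L.+1) 'X^(tri m) * qb ('X : P) (L + L) (L - m) +
  \sum_(m < L) 'X^(tri m) * qb ('X : P) (L + L) (m + L.+1).
Proof.
have R := rothe ('X : P) (L + L) ('X^L) 1.
rewrite big_split_ord /= part1 part2 in R.
have E : forall k, 'X^('C(k, 2)) * qb ('X : P) (L + L) k * 1 ^+ k * ('X^L) ^+ (L + L - k) =
   'X^('C(k, 2) + L * (L + L - k)) * qb ('X : P) (L + L) k.
  by move=> k; rewrite expr1n mulr1 -exprM exprD; ring.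
rewrite (eq_bigr _ (fun (k : 'I_(L + L).+1) _ => E k)) in R.
rewrite -(big_mkord xpredT (fun k => 'X^('C(k, 2) + L * (L + L - k)) * qb ('X : P) (L + L) k)) in R.
rewrite (@big_cat_nat _ _ _ L.+1) /= in R; [|by []|by rewrite ltnS leq_addl].
rewrite big_nat_rev in R.
have S2 : \sum_(L.+1 <= i < (L + L).+1) 'X^('C(i, 2) + L * (L + L - i)) * qb ('X : P) (L + L) i
  = \sum_(i < L) 'X^('C(i + L.+1, 2) + L * (L + L - (i + L.+1))) * qb ('X : P) (L + L) (i + L.+1).
  rewrite -{1}[L.+1]add0n big_addn big_mkord.
  by have -> : ((L + L).+1 - L.+1 = L)%N by lia.
rewrite S2 big_mkord in R.
have hE : ('X^('C(L,2) + L * L) : P) != 0 by rewrite expf_neq0 // polyX_eq0.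
apply: (mulfI hE).
rewrite mulrDr !big_distrr /=.
have -> : 'X^('C(L, 2) + L * L) * (Dp L * ((1 + 1) * Dp K)) =
  'X^('C(L, 2)) * Dp L * ('X^(L * L) * ((1 + 1) * Dp K)) by rewrite exprD; ring.
rewrite R; congr (_ + _); apply: eq_bigr => i _.
  rewrite !add0n subSS mulrA -exprD -e1 //; exact: ltn_ord i.
rewrite mulrA -exprD -e2 //; exact: ltn_ord i.
Qed.

Definition Tp n : P := \sum_(m < n.+1) 'X^(tri m).

Lemma qbA n N j : (n <= j)%N -> (n <= N - j)%N -> (j <= N)%N ->
  eqm n.+1 (qb ('X : P) N j * F n) 1.
Proof.
move=> h1 h2 h3.
have h := @qb_fac _ ('X : P) N j h3.
have h' : eqm n.+1 (qb ('X : P) N j * F n * F n) (F n).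
  apply: (eqm_trans _ _ (qb ('X : P) N j * F j * F (N - j))).
    by apply: eqmM; [apply: eqmM => //|]; apply: eqm_sym; apply: F_trunc.
  by rewrite h; apply: F_trunc; apply: leq_trans h3.
have hA : eqm n.+1 (F n * Pn n) 1 by rewrite mulrC; apply: PnA.
apply: (eqm_trans _ _ (qb ('X : P) N j * F n * (F n * Pn n))).
  by rewrite -[X in eqm _ X]mulr1; apply: eqmM => //; apply: eqm_sym.
rewrite mulrA; apply: (eqm_trans _ _ (F n * Pn n)) => //.
by apply: eqmM.
Qed.

Lemma term_eqm n N j m : ((tri m < n.+1)%N -> [/\ (n <= j)%N, (n <= N - j)%N & (j <= N)%N]) ->
  eqm n.+1 ('X^(tri m) * (qb ('X : P) N j * F n)) 'X^(tri m).
Proof.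
case: (ltnP (tri m) n.+1) => h hc.
  case: (hc isT) => h1 h2 h3.
  by rewrite -[X in eqm _ _ X]mulr1; apply: eqmM => //; apply: qbA.
by apply: (eqm_trans _ _ 0); [apply: eqm_XnM | apply: eqm_sym; apply: eqm_Xn].
Qed.

Lemma Dp_trunc m K : (m <= K)%N -> eqm m.+1 (Dp K) (Dp m).
Proof.
move=> hmK; apply: (eqm_prod_trunc _ _ _ (fun i => 1 + 'X^(i.+1))) => // i /andP [h1 _].
by apply: eqm_1addX.
Qed.

Lemma Tp_trunc n K : (n.+1 <= K)%N -> eqm n.+1 (\sum_(m < K) 'X^(tri m)) (Tp n).
Proof.
move=> hK; apply: (eqm_sum_trunc _ _ _ (fun m => 'X^(tri m))) => // i /andP [h1 _].
by apply: eqm_Xn; apply: leq_trans h1 (tri_ge i).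
Qed.

Lemma gauss n : eqm n.+1 (Dp n * Dp n * F n) (Tp n).
Proof.
have G := gauss_exact n.*2.
set L := n.*2.+1 in G.
have h1 : eqm n.+1 (Dp L * ((1 + 1) * Dp n.*2) * F n) ((1 + 1) * (Dp n * Dp n * F n)).
  have -> : Dp L * ((1 + 1) * Dp n.*2) * F n = (1 + 1) * (Dp L * Dp n.*2 * F n) by ring.
  apply: eqmM => //; apply: eqmM => //.
  by apply: eqmM; apply: Dp_trunc; rewrite /L -addnn; lia.
have h2 : eqm n.+1 (Dp L * ((1 + 1) * Dp n.*2) * F n) (Tp n + Tp n).
  rewrite G mulrDl !big_distrl /=; apply: eqmD.
    apply: (eqm_trans _ _ (\sum_(m < L.+1) 'X^(tri m))); last by apply: Tp_trunc; rewrite /L; lia.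
    apply: eqm_sum => m; rewrite -mulrA; apply: term_eqm => hm.
    move: hm (tri_ge m) (ltn_ord m); rewrite /L; move: (tri m) => t; move: (nat_of_ord m) => k.
  rewrite -!addnn => *; split; lia.
  apply: (eqm_trans _ _ (\sum_(m < L) 'X^(tri m))); last by apply: Tp_trunc; rewrite /L; lia.
  apply: eqm_sum => m; rewrite -mulrA; apply: term_eqm => hm.
  move: hm (tri_ge m) (ltn_ord m); rewrite /L; move: (tri m) => t; move: (nat_of_ord m) => k.
  rewrite -!addnn => *; split; lia.
move=> i hi; have := h1 i hi; rewrite h2 // coefD mulrDl mul1r coefD.
move: ((Tp n)`_i) ((Dp n * Dp n * F n)`_i) => a b h; lia.
Qed.

Lemma tri_lt a b : (a < b)%N -> (tri a < tri b)%N.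
Proof. move=> h; have := tri_dbl a; have := tri_dbl b; nia. Qed.
Lemma tri_inj : injective tri.
Proof.
move=> a b h.
case: (ltngtP a b) => [hab|hab|//].
  by move: (tri_lt _ _ hab); rewrite h ltnn.
by move: (tri_lt _ _ hab); rewrite h ltnn.
Qed.
Lemma tri_eq m t : (tri m == t) = (m * m.+1 == t.*2)%N.
Proof.
rewrite -muln2 -(eqn_pmul2r (_ : 0 < 2)%N) // tri_dbl mulnC.
by [].
Qed.

Lemma tri_count t K : (t < K)%N ->
  \sum_(m < K) ((t == tri m)%:R : int) = (is_triangular t)%:R.
Proof.
move=> htK; case: (boolP (is_triangular t)) => [/existsP [k hk]|H].
  have hkt : tri k = t by apply/eqP; rewrite tri_eq.
  have hkK : (k < K)%N by apply: leq_ltn_trans htK; rewrite -ltnS.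
  rewrite (bigD1 (Ordinal hkK)) //= hkt eqxx big1 ?addr0 // => m hm.
  case: eqP => // htm; move: hm; rewrite -val_eqE /=.
  by have -> := tri_inj _ _ (etrans hkt htm); rewrite eqxx.
rewrite big1 // => m _; case: eqP => // E.
move: H; rewrite /is_triangular; case/existsP.
have hm : (m < t.+1)%N by rewrite ltnS E tri_ge.
by exists (Ordinal hm); rewrite /= -tri_eq E.
Qed.

Lemma Tp_coef n t : (t < n.+1)%N -> (Tp n)`_t = (is_triangular t)%:R.
Proof.
move=> ht; rewrite /Tp coef_sum -(tri_count t n.+1) //.
by apply: eq_bigr => m _; rewrite coefXn.
Qed.

Lemma U2_coef n s : (s <= n)%N ->
  (U2 n)`_s = if ~~ odd s then (p s./2)%:R else 0.
Proof.
move=> hs; rewrite /U2 coef_comp_poly_Xn // dvdn2.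
case: ifP => // _; rewrite -divn2; apply: (p_coef _ n) => //.
  by apply: leq_trans (leq_div _ _) hs.
exact: PnA.
Qed.

Lemma core n : eqm n.+1 (Tp n * U2 n) (Dp n).
Proof.
apply: (eqm_trans _ _ (Dp n * Dp n * F n * U2 n)).
  by apply: eqmM => //; apply: eqm_sym; apply: gauss.
have -> : Dp n * Dp n * F n * U2 n = Dp n * ((Dp n * F n) * U2 n) by rewrite !mulrA.
rewrite DA -[X in eqm _ _ X]mulr1; apply: eqmM => //.
exact: BU2.
Qed.

Lemma main_sum n :
  (Tp n * U2 n)`_n = \sum_(t < n.+1) (is_triangular t)%:R * (if ~~ odd (n - t) then (p (n - t)./2)%:R else 0).
Proof.
rewrite coefM; apply: eq_bigr => t _.
by rewrite Tp_coef // U2_coef // leq_subr.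
Qed.

Lemma key n : let S := (\sum_(t < n.+1) (is_triangular t)%:R *
    (if ~~ odd (n - t) then (p (n - t)./2)%:R else 0) : int)%R in
  S = (pd n)%:R /\ S = (po n)%:R.
Proof.
move=> S; rewrite /S -main_sum; split.
  by rewrite -pd_Dp; apply: core.
rewrite -po_Op (core n n (ltnSn n)); apply/esym; exact: euler.
Qed.

Lemma sum_cast n (b : bool) : odd n = b ->
  ((\sum_(0 <= t < n.+1 | is_triangular t && (odd t == b)) p ((n - t)./2))%:R : int) =
  (\sum_(t < n.+1) (is_triangular t)%:R *
    (if ~~ odd (n - t) then (p (n - t)./2)%:R else 0))%R.
Proof.
move=> hn; rewrite natr_sum big_mkord big_mkcond /=; apply: eq_bigr => t _.
rewrite oddB; last by rewrite -ltnS.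
case: (is_triangular t); rewrite /= ?mul0r ?mul1r //.
by rewrite hn; case: b {hn}; case: (odd t).
Qed.

Local Close Scope ring_scope.

Theorem theorem1 :
  (forall n : nat, 0 < n -> ~~ odd n ->
     \sum_(0 <= t < n.+1 | is_triangular t && ~~ odd t) p ((n - t)./2) = pd n)
  /\
  (forall n : nat, 0 < n -> odd n ->
     \sum_(0 <= t < n.+1 | is_triangular t && odd t) p ((n - t)./2) = po n).
Proof.
split=> n _ hn.
  apply/eqP; rewrite -(eqr_nat int).
  have -> : (\sum_(0 <= t < n.+1 | is_triangular t && ~~ odd t) p ((n - t)./2)) =
            (\sum_(0 <= t < n.+1 | is_triangular t && (odd t == false)) p ((n - t)./2)).
    by apply: eq_bigl => t; case: (odd t).
  by rewrite sum_cast ?(negbTE hn) // (key n).1.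
apply/eqP; rewrite -(eqr_nat int).
have -> : (\sum_(0 <= t < n.+1 | is_triangular t && odd t) p ((n - t)./2)) =
          (\sum_(0 <= t < n.+1 | is_triangular t && (odd t == true)) p ((n - t)./2)).
  by apply: eq_bigl => t; case: (odd t).
by rewrite sum_cast // (key n).2.
Qed.
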